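(* Let $G=H\oplus_3 K$ be a $3$-sum of $2$-connected cubic graphs $H$ and $K$ such that $\pi(G)=4$. If $\pi(H)\ge 5$ or $\pi(K)\ge 5$, then, with respect to every perfect-matching $4$-cover of $G$, each edge of the principal $3$-edge-cut is doubly covered.
   Context: Graphs are finite; loops and multiple edges are allowed. For a bridgeless cubic graph $G$, the perfect matching index $\pi(G)$ is the smallest number of perfect matchings whose union is $E(G)$; a perfect-matching $4$-cover is a set of four perfect matchings whose union is $E(G)$, and an edge is doubly covered if it belongs to exactly two of them. A $3$-sum $H\oplus_3 K$ with distinguished vertices $u\in V(H)$, $v\in V(K)$ is obtained by deleting $u$ and $v$ and joining the three dangling edge-ends formerly incident with $u$ bijectively to the three dangling edge-ends formerly incident with $v$; the three new edges form the principal $3$-edge-cut. *)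

(* Defs.v *)
From HB Require Import structures.
From mathcomp Require Import all_boot.
Set Implicit Arguments. Unset Strict Implicit. Unset Printing Implicit Defensive.

(* A finite multigraph: a vertex set and an edge set inside finite carrier
   types, and an endpoint map.  A loop is an edge e with ends e = (x, x). *)
Record mgraph := MGraph {
  gV : finType;
  gE : finType;
  vset : {set gV};
  eset : {set gE};
  ends : gE -> gV * gV }.

Section Graphs.
Variable G : mgraph.

Definition wf_graph : Prop :=
  forall e, e \in eset G -> ((@ends G e).1 \in vset G) /\ ((@ends G e).2 \in vset G).

Definition incident (x : gV G) (e : gE G) : bool :=
  ((@ends G e).1 == x) || ((@ends G e).2 == x).

Definition is_loop (e : gE G) : bool := (@ends G e).1 == (@ends G e).2.

(* degree: a loop contributes 2 *)
Definition degree (x : gV G) : nat :=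
  #|[set e in eset G | (@ends G e).1 == x]| + #|[set e in eset G | (@ends G e).2 == x]|.

Definition cubic : Prop := forall x, x \in vset G -> degree x = 3.

Definition adj (S : {set gE G}) : rel (gV G) :=
  fun x y => [exists e in S, (@ends G e == (x, y)) || (@ends G e == (y, x))].

Definition connected_by (S : {set gE G}) : Prop :=
  forall x y, x \in vset G -> y \in vset G -> connect (adj S) x y.

Definition connected_graph : Prop := connected_by (eset G).

Definition bridgeless : Prop :=
  forall e, e \in eset G -> connected_by (eset G :\ e).

(* 2-connected (for cubic graphs: connected and bridgeless) *)
Definition two_connected : Prop := connected_graph /\ bridgeless.

Definition perfect_matching (M : {set gE G}) : Prop :=
  M \subset eset G /\ (forall e, e \in M -> ~~ is_loop e) /\
  (forall x, x \in vset G -> #|[set e in M | incident x e]| = 1).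

Definition pm_cover (k : nat) (M : 'I_k -> {set gE G}) : Prop :=
  (forall i, perfect_matching (M i)) /\ (\bigcup_(i < k) M i = eset G).

Definition pmi_le (k : nat) : Prop :=
  exists j, exists M : 'I_j -> {set gE G}, j <= k /\ pm_cover M.

Definition pmi_eq (k : nat) : Prop := pmi_le k /\ ~ pmi_le k.-1.

Definition doubly_covered (k : nat) (M : 'I_k -> {set gE G}) (e : gE G) : bool :=
  #|[set i | e \in M i]| == 2.
End Graphs.

Definition other_end (G : mgraph) (w : gV G) (e : gE G) : gV G :=
  if (@ends G e).1 == w then (@ends G e).2 else (@ends G e).1.

Definition sum3_bij (H K : mgraph) (u : gV H) (v : gV K) (f : gE H -> gE K) : Prop :=
  (forall a, a \in eset H -> incident u a -> (f a \in eset K) && incident v (f a)) /\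
  (forall a1 a2, a1 \in eset H -> incident u a1 -> a2 \in eset H -> incident u a2 ->
      f a1 = f a2 -> a1 = a2) /\
  (forall b, b \in eset K -> incident v b ->
      exists2 a, (a \in eset H) && incident u a & f a = b).

(* The 3-sum H (+)_3 K: vertices V(H)-u and V(K)-v; edges of H not at u,
   edges of K not at v, and for each edge a of H at u a new edge (still
   labelled inl a) joining the other end of a to the other end of f a. *)
Definition sum3 (H K : mgraph) (u : gV H) (v : gV K) (f : gE H -> gE K) : mgraph :=
  @MGraph (gV H + gV K)%type (gE H + gE K)%type
    [set x | match x with
             | inl a => (a \in vset H) && (a != u)
             | inr b => (b \in vset K) && (b != v) end]
    [set e | match e with
             | inl a => a \in eset H
             | inr b => (b \in eset K) && ~~ incident v b end]
    (fun e => match e with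
     | inl a => if incident u a then (inl (other_end u a), inr (other_end v (f a)))
                else (inl (@ends H a).1, inl (@ends H a).2)
     | inr b => (inr (@ends K b).1, inr (@ends K b).2) end).

Definition principal_cut (H K : mgraph) (u : gV H) (v : gV K) (f : gE H -> gE K)
  : {set gE (sum3 u v f)} :=
  [set e : (gE H + gE K)%type | match e with
                  | inl a => (a \in eset H) && incident u a
                  | inr _ => false end].

(* Main.v *)
Require Import Defs.
From mathcomp Require Import all_boot zify.
Set Implicit Arguments. Unset Strict Implicit. Unset Printing Implicit Defensive.

Lemma no_loop (G : mgraph) : wf_graph G -> cubic G -> bridgeless G ->
  forall a, a \in eset G -> ~~ is_loop a.
Proof.
move=> wf cub br a aE; apply/negP => la.
set x := (ends a).1.
have la2 : (ends a).2 = x by rewrite /x (eqP la).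
have xV : x \in vset G by have [] := wf a aE.
set S1 := [set e in eset G | (ends e).1 == x].
set S2 := [set e in eset G | (ends e).2 == x].
have dx : #|S1| + #|S2| = 3 by have := cub x xV.
have aS1 : a \in S1 by rewrite inE aE eqxx.
have aS2 : a \in S2 by rewrite inE aE la2 eqxx.
have h1 : #|S1 :&: S2| <= #|S1| by apply: subset_leq_card; apply: subsetIl.
have h2 : #|S1 :&: S2| <= #|S2| by apply: subset_leq_card; apply: subsetIr.
have h4 : #|S1 :|: S2| + #|S1 :&: S2| = #|S1| + #|S2| by rewrite cardsUI.
have h5 : 1 <= #|S1 :&: S2| by apply/card_gt0P; exists a; rewrite inE aS1 aS2.
have h6 : #|S1 :|: S2| = 2 by lia.
have h7 : #|S1 :&: S2| = 1 by lia.
have aI : a \in S1 :|: S2 by rewrite inE aS1.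
have h8 : #|(S1 :|: S2) :\ a| = 1 by rewrite (cardsD1 a) aI in h6; lia.
have [b Eb] : exists b, (S1 :|: S2) :\ a = [set b] by apply/cards1P; rewrite h8.
have bI : b \in (S1 :|: S2) :\ a by rewrite Eb set11.
have ba : b != a by move: bI; rewrite !inE => /andP[].
have only : forall e, e \in eset G -> incident x e -> e != b -> e = a.
  move=> e eE ie eb; apply/eqP; apply/negPn/negP => ea.
  have : e \in (S1 :|: S2) :\ a.
    by rewrite !inE ea eE /=; move: ie; rewrite /incident => /orP[] ->; rewrite ?orbT.
  by rewrite Eb inE (negbTE eb).
have bE : b \in eset G by move: bI; rewrite !inE => /andP[_ /orP[]] /andP[].
have bnl : ~~ ((b \in S1) && (b \in S2)).
  apply/negP => /andP[b1 b2].
  have : b \in S1 :&: S2 by rewrite inE b1 b2.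
  have -> : S1 :&: S2 = [set a].
    apply/eqP; rewrite eq_sym eqEcard sub1set inE aS1 aS2 cards1 h7 //.
  by rewrite inE (negbTE ba).
set y := other_end x b.
have yx : y != x.
  move: bnl bI; rewrite /y /other_end !inE bE /=.
  by case: ifP => hh; rewrite ?hh /= => // h _.
have yV : y \in vset G by rewrite /y /other_end; case: ifP => _; have [] := wf b bE.
have := br b bE x y xV yV.
have cl : closed (adj (eset G :\ b)) (pred1 x).
  have step : forall z z', adj (eset G :\ b) z z' -> z == x -> z' == x.
    move=> z z' /existsP[e /andP[]]; rewrite !inE => /andP[eb eE] /orP[] /eqP ee /eqP zx;
    have ie : incident x e by rewrite /incident ee -zx /= eqxx ?orbT.
    - by have ea := only e eE ie eb; move: la2; rewrite -ea ee /= => ->.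
    - by have ea := only e eE ie eb; subst e; rewrite /x ee.
  move=> z z' h /=; apply/idP/idP; first exact: step h.
  apply: step; move: h => /existsP[e /andP[eS /orP[] ee]]; apply/existsP; exists e;
    by rewrite eS ee ?orbT.
move/(closed_connect cl); rewrite !inE eqxx => /esym.
by rewrite (negbTE yx).
Qed.

Lemma card_sum (T : finType) (P : pred T) : #|[set x | P x]| = \sum_x (P x : nat).
Proof.
rewrite -sum1_card big_mkcond /=; apply: eq_bigr => x _; rewrite inE; by case: (P x).
Qed.

Lemma dc (T : finType) k (M : 'I_k -> {set T}) (I : {set T}) :
  \sum_(e in I) #|[set i | e \in M i]| = \sum_(i < k) #|[set e in I | e \in M i]|.
Proof.
under eq_bigr do rewrite card_sum.
under [RHS]eq_bigr do rewrite card_sum.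
rewrite exchange_big /=; apply: eq_bigr => i _.
by rewrite big_mkcond /=; apply: eq_bigr => e _; case: (e \in I).
Qed.

Lemma card_bij (T1 T2 : finType) (g : T1 -> T2) (A : {set T1}) (B : {set T2}) :
  {in A &, injective g} -> (forall b, b \in A -> g b \in B) ->
  (forall e, e \in B -> exists2 b, b \in A & g b = e) -> #|A| = #|B|.
Proof.
move=> inj m s; suff -> : B = g @: A by rewrite card_in_imset.
apply/setP => e; apply/idP/imsetP => [eB|[b bA ->]]; last exact: m.
by have [b bA <-] := s e eB; exists b.
Qed.

Lemma deg3 (G : mgraph) : cubic G -> (forall a, a \in eset G -> ~~ is_loop a) ->
  forall x, x \in vset G -> #|[set e in eset G | incident x e]| = 3.
Proof.
move=> cub nl x xV; rewrite -(cub x xV) /degree.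
have -> : [set e in eset G | incident x e] =
  [set e in eset G | (ends e).1 == x] :|: [set e in eset G | (ends e).2 == x].
  by apply/setP => e; rewrite !inE /incident andb_orr.
rewrite cardsU.
suff -> : [set e in eset G | (ends e).1 == x] :&: [set e in eset G | (ends e).2 == x] = set0.
  by rewrite cards0 subn0.
apply/setP => e; rewrite !inE; apply/negP => /andP[/andP[eE /eqP e1] /andP[_ /eqP e2]].
by move: (nl e eE); rewrite /is_loop e1 e2 eqxx.
Qed.

Lemma dc_vert (G : mgraph) (A : {set gE G}) : wf_graph G -> A \subset eset G ->
  (forall a, a \in A -> ~~ is_loop a) ->
  \sum_(x in vset G) #|[set e in A | incident x e]| = 2 * #|A|.
Proof.
move=> wf sA nl.
under eq_bigr do rewrite card_sum.
rewrite exchange_big /= -sum1_card big_distrr /=.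
rewrite [RHS]big_mkcond /=; apply: eq_bigr => a _.
case aA: (a \in A); last by apply: big1 => x _.
rewrite muln1 -big_mkcondr /=.
have [a1 a2] := wf a (subsetP sA a aA).
have nla := nl a aA.
transitivity (#|[set x in vset G | incident x a]|).
  by rewrite -sum1_card big_mkcond /= [RHS]big_mkcond /=; apply: eq_bigr => x _; rewrite inE; case: (x \in vset G); case: (incident x a).
have -> : [set x in vset G | incident x a] = [set (ends a).1; (ends a).2].
  apply/setP => x; rewrite !inE /incident (eq_sym _ x) (eq_sym _ x).
  have [->|n1] := eqVneq x (ends a).1; first by rewrite a1.
  have [->|n2] := eqVneq x (ends a).2; first by rewrite a2.
  by rewrite /= andbF.
by rewrite cards2 nla.
Qed.

Lemma esetl (H K : mgraph) (u : gV H) (v : gV K) (f : gE H -> gE K) a :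
  ((inl a : gE (sum3 u v f)) \in eset (sum3 u v f)) = (a \in eset H).
Proof. by rewrite /= inE. Qed.
Lemma esetr (H K : mgraph) (u : gV H) (v : gV K) (f : gE H -> gE K) b :
  ((inr b : gE (sum3 u v f)) \in eset (sum3 u v f)) = (b \in eset K) && ~~ incident v b.
Proof. by rewrite /= inE. Qed.
Lemma vsetl (H K : mgraph) (u : gV H) (v : gV K) (f : gE H -> gE K) x :
  ((inl x : gV (sum3 u v f)) \in vset (sum3 u v f)) = (x \in vset H) && (x != u).
Proof. by rewrite /= inE. Qed.
Lemma vsetr (H K : mgraph) (u : gV H) (v : gV K) (f : gE H -> gE K) y :
  ((inr y : gV (sum3 u v f)) \in vset (sum3 u v f)) = (y \in vset K) && (y != v).
Proof. by rewrite /= inE. Qed.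
Lemma cutl (H K : mgraph) (u : gV H) (v : gV K) (f : gE H -> gE K) a :
  ((inl a : gE (sum3 u v f)) \in principal_cut u v f) = (a \in eset H) && incident u a.
Proof. by rewrite /principal_cut inE. Qed.
Lemma cutr (H K : mgraph) (u : gV H) (v : gV K) (f : gE H -> gE K) b :
  ((inr b : gE (sum3 u v f)) \in principal_cut u v f) = false.
Proof. by rewrite /principal_cut inE. Qed.

Lemma oe_inc (G : mgraph) (v y : gV G) b : incident v b -> y != v ->
  (other_end v b == y) = incident y b.
Proof.
rewrite /incident /other_end => /orP[] /eqP hv yv.
- by rewrite hv eqxx (eq_sym v y) (negbTE yv).
- case: ifP => [/eqP h1|h1]; first by rewrite h1 hv (eq_sym v y) (negbTE yv).
  by rewrite hv (eq_sym v y) (negbTE yv) orbF.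
Qed.

Lemma inc_ll (H K : mgraph) (u : gV H) (v : gV K) (f : gE H -> gE K) x a : x != u ->
  @incident (sum3 u v f) (inl x) (inl a) = incident x a.
Proof.
move=> xu; rewrite {1}/incident /=.
case: ifP => ua /=; last by rewrite /incident.
rewrite orbF; have -> : (inl (other_end u a) == inl x :> (gV H + gV K)%type) = (other_end u a == x) by [].
by rewrite oe_inc.
Qed.

Lemma inc_lr (H K : mgraph) (u : gV H) (v : gV K) (f : gE H -> gE K) x b :
  @incident (sum3 u v f) (inl x) (inr b) = false.
Proof. by rewrite /incident /=. Qed.

Lemma inc_rr (H K : mgraph) (u : gV H) (v : gV K) (f : gE H -> gE K) y b :
  @incident (sum3 u v f) (inr y) (inr b) = incident y b.
Proof. by rewrite /incident /=. Qed.

Lemma inc_rl (H K : mgraph) (u : gV H) (v : gV K) (f : gE H -> gE K) y a :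
  @incident (sum3 u v f) (inr y) (inl a) = incident u a && (other_end v (f a) == y).
Proof. by rewrite {1}/incident /=; case: ifP => ua /=. Qed.

Lemma inc_oe (H K : mgraph) (u : gV H) (v : gV K) (f : gE H -> gE K) a : incident u a ->
  @incident (sum3 u v f) (inl (other_end u a)) (inl a).
Proof. by move=> ua; rewrite /incident /= ua eqxx. Qed.
Lemma sum_lb (T : finType) (I : {set T}) (F : T -> nat) x : x \in I ->
  (forall y, y \in I -> 1 <= F y) -> F x + #|I| - 1 <= \sum_(y in I) F y.
Proof.
move=> xI h; rewrite (big_setD1 x xI) /= (cardsD1 x I) xI.
have : \sum_(y in I :\ x) 1 <= \sum_(y in I :\ x) F y.
  by apply: leq_sum => y; rewrite inE => /andP[_ /h].
rewrite sum_nat_const muln1; lia.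
Qed.

Lemma sum_ub (T : finType) (I : {set T}) (F : T -> nat) x : x \in I ->
  (forall y, y \in I -> F y <= 2) -> \sum_(y in I) F y <= F x + 2 * (#|I| - 1).
Proof.
move=> xI h; rewrite (big_setD1 x xI) /= (cardsD1 x I) xI.
have : \sum_(y in I :\ x) F y <= \sum_(y in I :\ x) 2.
  by apply: leq_sum => y; rewrite inE => /andP[_ /h].
rewrite sum_nat_const; lia.
Qed.

Theorem lemma6p3 (H K : mgraph) (u : gV H) (v : gV K) (f : gE H -> gE K) :
  wf_graph H -> wf_graph K -> cubic H -> cubic K ->
  two_connected H -> two_connected K ->
  u \in vset H -> v \in vset K -> sum3_bij u v f ->
  pmi_eq (sum3 u v f) 4 ->
  (~ pmi_le H 4 \/ ~ pmi_le K 4) ->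
  forall M : 'I_4 -> {set gE (sum3 u v f)}, pm_cover M ->
  forall e, e \in principal_cut u v f -> doubly_covered M e.
Proof.
move=> wfH wfK cubH cubK [_ brH] [_ brK] uV vV [fm [finj fsurj]] _ hyp M [Mpm Mcov] e0 e0C.
have nlH := no_loop wfH cubH brH.
have nlK := no_loop wfK cubK brK.
have MsubE : forall i, M i \subset eset (sum3 u v f) by move=> i; have [] := Mpm i.
have Mdeg : forall i x, x \in vset (sum3 u v f) -> #|[set e in M i | incident x e]| = 1.
  by move=> i x xV; have [_ [_]] := Mpm i; apply.
have inM : forall e, e \in eset (sum3 u v f) -> exists i, e \in M i.
  by move=> e; rewrite -Mcov => /bigcupP[i _ ei]; exists i.
have inE' : forall i e, e \in M i -> e \in eset (sum3 u v f).
  by move=> i e; apply/subsetP.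
pose mult := fun e => #|[set i | e \in M i]|.
pose C := principal_cut u v f.
pose c := fun i => #|[set e in C | e \in M i]|.
have mult1 : forall e, e \in eset (sum3 u v f) -> 1 <= mult e.
  move=> e eE; have [i ei] := inM e eE; apply/card_gt0P; exists i; by rewrite inE.
have multb : forall e, e \in C -> mult e <= 2.
  case=> [a|b]; rewrite /C ?cutl ?cutr // => /andP[aE ua].
  set w := other_end u a.
  have wu : w != u.
    apply/negP => /eqP wu; move: (nlH a aE); rewrite /is_loop.
    move: ua wu; rewrite /w /other_end /incident.
    by case: ifP => [/eqP -> _ ->|_ /= /eqP -> ->]; rewrite eqxx.
  have wV : w \in vset H by rewrite /w /other_end; case: ifP => _; have [] := wfH a aE.
  set I := [set e in eset (sum3 u v f) | incident (inl w : gV (sum3 u v f)) e].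
  have I3 : #|I| = 3.
    rewrite -(deg3 cubH nlH wV); symmetry; apply: (@card_bij _ _ inl).
    - by move=> ? ? _ _ [].
    - by move=> a1; rewrite !inE => /andP[a1E ia1]; rewrite ?esetl a1E inc_ll.
    - case=> [a1|b']; rewrite !inE; last by rewrite inc_lr andbF.
      by rewrite ?esetl inc_ll // => ha; exists a1; rewrite ?inE.
  have sum4 : \sum_(e in I) mult e = 4.
    rewrite /mult dc.
    under eq_bigr => i _.
      have -> : [set e in I | e \in M i] = [set e in M i | incident (inl w : gV (sum3 u v f)) e].
        apply/setP => e; rewrite !inE; apply/idP/idP => /andP[h1 h2].
        - by move: h1 => /andP[_ ->]; rewrite h2.
        - by move: (inE' i e h1); rewrite inE => ->; rewrite h1 h2.
      rewrite Mdeg; last by rewrite vsetl wV wu.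
    over.
    by rewrite sum_nat_const card_ord.
  have aI : inl a \in I by rewrite inE ?esetl aE inc_oe.
  have m1 : forall y, y \in I -> 1 <= mult y.
    by move=> y; rewrite inE => /andP[yE _]; apply: mult1.
  have := sum_lb aI m1.
  rewrite sum4 I3; lia.
pose NH := fun i => [set a in eset H | (inl a : gE (sum3 u v f)) \in M i].
have NHsub : forall i, NH i \subset eset H by move=> i; apply/subsetP => a; rewrite inE => /andP[].
have cardHx : forall i x, x \in vset H ->
    #|[set a in NH i | incident x a]| = if x == u then c i else 1.
  move=> i x xV; case: eqP => [->|/eqP xu].
  - apply: (@card_bij _ _ inl).
    + by move=> ? ? _ _ [].
    + by move=> a; rewrite !inE => /andP[/andP[aE aM] ua]; rewrite aM aE ua.
    + case=> [a|b]; rewrite inE /C ?cutl ?cutr //= => /andP[/andP[aE ua] aM].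
      by exists a; rewrite // !inE aE aM ua.
  - rewrite -(Mdeg i (inl x)); last by rewrite vsetl xV xu.
    apply: (@card_bij _ _ inl).
    + by move=> ? ? _ _ [].
    + by move=> a; rewrite !inE => /andP[/andP[aE aM] xa]; rewrite aM inc_ll.
    + case=> [a|b]; rewrite inE ?inc_lr ?andbF // inc_ll // => /andP[aM xa].
      have := inE' i _ aM; rewrite inE /= => aE.
      by exists a; rewrite // !inE aE aM xa.
have Vpos : 0 < #|vset H| by apply/card_gt0P; exists u.
have V2 : 3 * #|vset H| = 2 * #|eset H|.
  rewrite -(dc_vert wfH (subxx _) nlH).
  rewrite (eq_bigr (fun _ => 3)); first by rewrite sum_nat_const mulnC.
  by move=> x xV; apply: deg3.
have par : forall i, c i + (#|vset H| - 1) = 2 * #|NH i|.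
  move=> i; rewrite -(dc_vert wfH (NHsub i)); last by move=> a /(subsetP (NHsub i)); apply: nlH.
  rewrite (big_setD1 u uV) /= cardHx // eqxx.
  rewrite (eq_bigr (fun _ => 1)); last first.
    move=> x; rewrite !inE => /andP[xu xV]; rewrite cardHx //; by rewrite (negbTE xu).
  by rewrite sum_nat_const muln1 (cardsD1 u (vset H)) uV add1n subn1.
have codd : forall i, c i %% 2 = 1 /\ 1 <= c i.
  move=> i; have := par i; lia.
have C3 : #|C| = 3.
  rewrite -(deg3 cubH nlH uV); symmetry; apply: (@card_bij _ _ inl).
  - by move=> ? ? _ _ [].
  - by move=> a; rewrite !inE => /andP[aE ua]; rewrite ?inE /C ?cutl aE ua.
  - case=> [a|b]; rewrite /C ?cutl ?cutr // => /andP[aE ua].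
    by exists a; rewrite // inE aE ua.
have sumC : \sum_(e in C) mult e = \sum_(i < 4) c i by rewrite /mult dc.
have covH : (forall i, c i = 1) -> pmi_le H 4.
  move=> c1; exists 4, NH; split => //; split.
  - move=> i; split; first exact: NHsub.
    split; first by move=> a /(subsetP (NHsub i)); apply: nlH.
    by move=> x xV; rewrite cardHx //; case: ifP.
  - apply/setP => a; apply/bigcupP/idP => [[i _]|aE]; first by rewrite inE => /andP[].
    have [i ai] : exists i, (inl a : gE (sum3 u v f)) \in M i by apply: inM; rewrite esetl.
    by exists i => //; rewrite inE aE.
pose finvo := fun b => [pick a | (a \in eset H) && incident u a && (f a == b)].
pose g := fun b : gE K => if incident v b then
   (if finvo b is Some a then (inl a : gE (sum3 u v f)) else inr b) else inr b.
have finvP : forall b, b \in eset K -> incident v b ->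
    exists2 a, g b = inl a & [/\ a \in eset H, incident u a & f a = b].
  move=> b bE vb; rewrite /g vb /finvo; case: pickP => [a /andP[/andP[aE ua] /eqP fa] | none] //=.
    by exists a.
  have [a /andP[aE ua] fa] := fsurj b bE vb.
  by move: (none a); rewrite aE ua fa eqxx.
have gfa : forall a, a \in eset H -> incident u a -> g (f a) = inl a.
  move=> a aE ua; have /andP[fE fv] := fm a aE ua.
  have [a' -> [h1 h2 h3]] := finvP _ fE fv; congr inl; exact: finj.
have gE' : forall b, b \in eset K -> g b \in eset (sum3 u v f).
  move=> b bE; case vb: (incident v b); last by rewrite /g vb esetr bE vb.
  by have [a -> [h1 _ _]] := finvP b bE vb; rewrite esetl.
have ginj : {in eset K &, injective g}.
  move=> b1 b2 b1E b2E.
  case v1: (incident v b1); case v2: (incident v b2).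
  - have [a1 -> [_ _ <-]] := finvP b1 b1E v1; have [a2 -> [_ _ <-]] := finvP b2 b2E v2.
    by move=> [->].
  - have [a1 -> _] := finvP b1 b1E v1; by rewrite /g v2.
  - have [a2 -> _] := finvP b2 b2E v2; by rewrite /g v1.
  - by rewrite /g v1 v2 => [[]].
pose NK := fun i => [set b in eset K | g b \in M i].
have NKsub : forall i, NK i \subset eset K by move=> i; apply/subsetP => b; rewrite inE => /andP[].
have cardKy : forall i y, y \in vset K ->
    #|[set b in NK i | incident y b]| = if y == v then c i else 1.
  move=> i y yV; case: eqP => [->|/eqP yv].
  - apply: (@card_bij _ _ g).
    + by move=> b1 b2; rewrite !inE => /andP[/andP[b1E _] _] /andP[/andP[b2E _] _]; apply: ginj.
    + move=> b; rewrite !inE => /andP[/andP[bE bM] vb]; rewrite bM andbT.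
      have [a -> [h1 h2 _]] := finvP b bE vb.
      by rewrite ?inE /C ?cutl h1 h2.
    + case=> [a|b]; rewrite inE /C ?cutl ?cutr //= => /andP[/andP[aE ua] aM].
      have /andP[fE fv] := fm a aE ua.
      have ga := gfa a aE ua.
      by exists (f a); rewrite // !inE fE fv ga aM.
  - rewrite -(Mdeg i (inr y)); last by rewrite vsetr yV yv.
    apply: (@card_bij _ _ g).
    + by move=> b1 b2; rewrite !inE => /andP[/andP[b1E _] _] /andP[/andP[b2E _] _]; apply: ginj.
    + move=> b; rewrite !inE => /andP[/andP[bE bM] yb]; rewrite bM /=.
      case vb: (incident v b); last by rewrite /g vb inc_rr.
      have [a -> [h1 h2 h3]] := finvP b bE vb.
      by rewrite inc_rl h2 h3 oe_inc.
    + case=> [a|b]; rewrite inE ?inc_rr ?inc_rl.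
      * move=> /andP[aM /andP[ua oy]].
        have := inE' i _ aM; rewrite inE /= => aE.
        have /andP[fE fv] := fm a aE ua.
        have ga := gfa a aE ua.
        by exists (f a); rewrite // !inE fE ga aM -(oe_inc fv yv).
      * move=> /andP[bM yb].
        have := inE' i _ bM; rewrite inE /= => /andP[bE nvb].
        have gb : g b = inr b by rewrite /g (negbTE nvb).
        by exists b; rewrite // !inE bE gb bM.
have covK : (forall i, c i = 1) -> pmi_le K 4.
  move=> c1; exists 4, NK; split => //; split.
  - move=> i; split; first exact: NKsub.
    split; first by move=> b /(subsetP (NKsub i)); apply: nlK.
    by move=> y yV; rewrite cardKy //; case: ifP.
  - apply/setP => b; apply/bigcupP/idP => [[i _]|bE]; first by rewrite inE => /andP[].
    have [i bi] := inM (g b) (gE' b bE).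
    by exists i => //; rewrite inE bE.
rewrite /doubly_covered -/(mult e0).
have me0 := multb e0 e0C.
case: (boolP [forall i, c i == 1]) => [/forallP h|].
  have c1 : forall i, c i = 1 by move=> i; apply/eqP.
  by exfalso; case: hyp; apply; [apply: covH | apply: covK].
move/forallPn => [i ci].
have ci3 : 3 <= c i by have [h1 h2] := codd i; move: ci => /eqP; lia.
have sumc : 6 <= \sum_(i < 4) c i.
  have -> : \sum_(j < 4) c j = \sum_(j in [set: 'I_4]) c j by apply: eq_bigl => j; rewrite in_setT.
  have cpos : forall j, j \in [set: 'I_4] -> 1 <= c j by move=> j _; have [] := codd j.
  have := sum_lb (in_setT i) cpos; rewrite cardsT card_ord => h.
  apply: (leq_trans _ h); lia.
have := sum_ub e0C multb; rewrite sumC C3; lia.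
Qed.
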